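(* Let $k\ge 2$ and let $L$ be a subspace of $\bigwedge^{k}V$ such that $e_{1}\wedge e_{2}\wedge\bigwedge^{k-2}V\subseteq L$ and $e_1\wedge e_2\wedge x=0$ for all $x\in L$. If $N_{j\to i}L=L$ for all $i<j$ with $i,j\geq3$, then $L$ has a basis $B$ such that for every $b\in B$ and every $j\geq3$, either $b\in\bigwedge^kV^{(j)}$ or $b\in e_j\wedge\bigwedge^{k-1}V^{(j)}$ (i.e. the basis is monomial with respect to every $e_j$ with $j\ge3$).
   Context: $\mathbb{F}$ is a field (assumed throughout the paper, for expository purposes, to have characteristic not $2$), $V$ is an $n$-dimensional $\mathbb{F}$-vector space with a fixed basis $e_1,\dots,e_n$, and $\bigwedge V$ its exterior algebra. For $j\in[n]$, $V^{(j)}$ is the span of $\{e_h:h\neq j\}$, and $\bigwedge V^{(j)}$ is viewed as a subalgebra of $\bigwedge V$. Slow shift: for distinct $i,j\in[n]$ and nonzero $m\in\bigwedge^kV$, write uniquely $m=x+e_j\wedge y$ with $x\in\bigwedge^kV^{(j)}$, $y\in\bigwedge^{k-1}V^{(j)}$, and set $N_{j\to i}m=x+e_i\wedge y$ if this is nonzero, and $N_{j\to i}m=e_j\wedge y$ otherwise (the limit as $t\to0$ of the projective action of the linear map $e_j\mapsto e_i+te_j$ fixing the other $e_h$). For a subspace $L$ of $\bigwedge^kV$, $N_{j\to i}L$ is the span of $\{N_{j\to i}m:m\in L\setminus\{0\}\}$. *)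

(* Defs.v *)
(* Concrete model of the exterior algebra of V = F^n with
   basis e_0, ..., e_(n-1) (0-based: the paper's e_1 is index 0). *)
From HB Require Import structures.
From mathcomp Require Import all_boot all_order all_algebra.
Set Implicit Arguments. Unset Strict Implicit. Unset Printing Implicit Defensive.
Import Order.TTheory GRing.Theory Num.Theory.
Local Open Scope ring_scope.

(* Elements of /\V: coordinates on the basis e_S = e_(s1) /\ ... /\ e_(sr),
   S = {s1 < ... < sr} a subset of [n]. *)
Notation ext F n := {ffun {set 'I_n} -> F^o}.

Section Exterior.
Variables (F : fieldType) (n : nat).

Definition eS (S : {set 'I_n}) : ext F n := [ffun T => (T == S)%:R].

Definition ev (j : 'I_n) : ext F n := eS [set j].

(* e_S /\ e_T = wsign S T * e_(S u T): zero if S, T meet, otherwise the sign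
   of the permutation sorting the concatenation, i.e. (-1)^(#inversions). *)
Definition wsign (S T : {set 'I_n}) : F :=
  if [disjoint S & T] then
    (-1) ^+ #|[set p : 'I_n * 'I_n | (p.1 \in S) && (p.2 \in T) && (p.2 < p.1)%N]|
  else 0.

Definition wedge (f g : ext F n) : ext F n :=
  \sum_(S : {set 'I_n}) \sum_(T : {set 'I_n}) (f S * g T * wsign S T) *: eS (S :|: T).

Definition extk (k : nat) : {vspace ext F n} :=
  <<[seq eS A | A <- enum [set A : {set 'I_n} | #|A| == k]]>>%VS.

Definition extk_without (j : 'I_n) (k : nat) : {vspace ext F n} :=
  <<[seq eS A | A <- enum [set A : {set 'I_n} | (#|A| == k) && (j \notin A)]]>>%VS.

(* the unique decomposition m = x + e_j /\ y with x, y in /\V^(j) *)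
Definition xpart (j : 'I_n) (m : ext F n) : ext F n :=
  [ffun S : {set 'I_n} => if j \in S then 0 else m S].
Definition ypart (j : 'I_n) (m : ext F n) : ext F n :=
  [ffun S : {set 'I_n} => if j \in S then 0
             else wedge (ev j) (eS S) (j |: S) * m (j |: S)].

Definition slow_shift (j i : 'I_n) (m : ext F n) : ext F n :=
  let z := xpart j m + wedge (ev i) (ypart j m) in
  if z != 0 then z else wedge (ev j) (ypart j m).

Definition in_shift_span (j i : 'I_n) (L : {vspace ext F n}) (v : ext F n) : Prop :=
  exists s : seq (ext F n),
    all (fun m => (m \in L) && (m != 0)) s /\ v \in <<map (slow_shift j i) s>>%VS.

Definition shift_stable (j i : 'I_n) (L : {vspace ext F n}) : Prop :=
  forall v : ext F n, in_shift_span j i L v <-> v \in L.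

End Exterior.

Arguments eS {F n}.
Arguments ev {F n}.
Arguments wsign {F n}.
Arguments wedge {F n}.
Arguments extk F n k.
Arguments extk_without F {n}.
Arguments xpart {F n}.
Arguments ypart {F n}.
Arguments slow_shift {F n}.
Arguments in_shift_span {F n}.
Arguments shift_stable {F n}.

(* Main.v *)
Require Import Defs.
From HB Require Import structures.
From mathcomp Require Import all_boot all_order all_algebra.
From mathcomp Require Import zify.
Import Order.TTheory GRing.Theory Num.Theory.
Local Open Scope ring_scope.

Module Aux.
Set Implicit Arguments. Unset Strict Implicit. Unset Printing Implicit Defensive.

Section Aux.
Variables (F : fieldType) (n : nat).
Local Notation E := (ext F n).

Definition proj (P : pred {set 'I_n}) (m : E) : E :=
  [ffun S => if P S then m S else 0].

Lemma scaleoE (a b : F) : (a *: (b : F^o)) = a * b.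
Proof. by []. Qed.

Lemma eS_coord A S : (eS A : E) S = (S == A)%:R.
Proof. by rewrite ffunE. Qed.

Lemma ffun_expand (x : E) : x = \sum_S x S *: eS S.
Proof.
apply/ffunP => U; rewrite sum_ffunE (bigD1 U) //= !ffunE scaleoE eqxx mulr1.
rewrite big1 ?addr0 // => S hS; rewrite !ffunE scaleoE eq_sym (negbTE hS) mulr0 //.
Qed.

Lemma wedgeE (f g : E) U : wedge f g U =
  \sum_S \sum_T f S * g T * wsign S T * (S :|: T == U)%:R.
Proof.
rewrite /wedge sum_ffunE; apply: eq_bigr => S _; rewrite sum_ffunE.
by apply: eq_bigr => T _; rewrite !ffunE scaleoE eq_sym.
Qed.


Lemma wedge_sl c A (g : E) U : wedge (c *: eS A) g U =
  c * \sum_T g T * wsign A T * (A :|: T == U)%:R.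
Proof.
rewrite wedgeE (bigD1 A) //= [X in _ + X]big1 ?addr0; last first.
  move=> S hS; apply: big1 => T _; rewrite !ffunE scaleoE (negbTE hS) mulr0 !mul0r //.
rewrite mulr_sumr; apply: eq_bigr => T _; rewrite !ffunE scaleoE eqxx mulr1 !mulrA //.
Qed.

Lemma wedge_eSl A (g : E) U : wedge (eS A) g U =
  \sum_T g T * wsign A T * (A :|: T == U)%:R.
Proof. by rewrite -(scale1r (eS A)) wedge_sl mul1r. Qed.

Lemma wedge_sl_eS c A B : wedge (c *: eS A) (eS B) = (c * wsign A B) *: (eS (A :|: B) : E).
Proof.
apply/ffunP => U; rewrite wedge_sl (bigD1 B) //= [X in _ + X]big1 ?addr0; last first.
  by move=> T hT; rewrite !ffunE (negbTE hT) !mul0r.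
by rewrite !ffunE scaleoE eqxx mul1r eq_sym mulrA.
Qed.

Lemma wsign_sq (A T : {set 'I_n}) : [disjoint A & T] -> wsign A T * wsign A T = 1 :> F.
Proof. by move=> h; rewrite /wsign h -exprD -signr_odd oddD addbb. Qed.

Lemma wsign_neq0 (A T : {set 'I_n}) : [disjoint A & T] -> wsign A T != 0 :> F.
Proof. by move=> h; rewrite /wsign h signr_eq0. Qed.

Lemma wedge_supp (f g : E) U :
  (forall S T, f S != 0 -> g T != 0 -> S :|: T != U) -> wedge f g U = 0.
Proof.
move=> h; rewrite wedgeE big1 // => S _; apply: big1 => T _.
have [->|fS] := eqVneq (f S) 0; first by rewrite !mul0r.
have [->|gT] := eqVneq (g T) 0; first by rewrite mulr0 !mul0r.
by rewrite (negbTE (h _ _ fS gT)) mulr0.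
Qed.

Lemma proj_sum P N (c : 'I_N -> F) (w : 'I_N -> E) :
  proj P (\sum_i c i *: w i) = \sum_i c i *: proj P (w i).
Proof.
apply/ffunP => S; rewrite !ffunE !sum_ffunE; case hP: (P S).
  by apply: eq_bigr => i _; rewrite !ffunE hP.
by rewrite big1 // => i _; rewrite !ffunE hP scaleoE mulr0.
Qed.

Lemma pres_span (L : {vspace E}) P (X : seq E) :
  (forall w, w \in X -> w \in L /\ (proj P w = w \/ proj P w = 0)) ->
  forall v, v \in <<X>>%VS -> proj P v \in L.
Proof.
move=> H v hv; rewrite (coord_span (X := in_tuple X) hv) proj_sum.
apply: rpred_sum => i _; apply: rpredZ.
have [hin [->|->]] := H _ (mem_nth 0 (ltn_ord i)) => //; exact: rpred0.
Qed.

Lemma span_eS (P : pred {set 'I_n}) (v : E) :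
  (v \in <<[seq eS A | A <- enum [set A : {set 'I_n} | P A]]>>%VS) <->
  (forall S, ~~ P S -> v S = 0).
Proof.
split.
  move=> hv S hS; rewrite (coord_span (X := in_tuple _) hv) sum_ffunE.
  apply: big1 => i _; rewrite ffunE.
  set X := [seq _ | _ <- _].
  have /mapP [A hA ->] : X`_i \in X by apply: mem_nth; exact: ltn_ord.
  rewrite mem_enum inE in hA; rewrite ffunE scaleoE.
  case: eqP => [eSA|]; last by rewrite mulr0.
  by rewrite eSA hA in hS.
move=> h; rewrite (ffun_expand v); apply: rpred_sum => S _.
case hS: (P S); last by rewrite h ?hS // scale0r rpred0.
by apply/rpredZ/memv_span/map_f; rewrite mem_enum inE.
Qed.

Lemma basis_subseq (X : seq E) : exists X', {subset X' <= X} /\ basis_of <<X>>%VS X'.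
Proof.
elim: X => [|x X [X' [hs hb]]].
  by exists [::]; split => //; rewrite /basis_of span_nil eqxx nil_free.
have hsp := span_basis hb; have hfr := basis_free hb.
case: (boolP (x \in <<X>>%VS)) => hx.
  exists X'; split; first by move=> y /hs; rewrite inE => ->; rewrite orbT.
  by rewrite /basis_of span_cons hsp (addv_idPr _) ?hfr ?eqxx // -memvE.
exists (x :: X'); split.
  by move=> y; rewrite !inE => /orP [->|/hs ->] //; rewrite orbT.
by rewrite /basis_of !span_cons hsp eqxx free_cons hsp hx hfr.
Qed.

End Aux.
Arguments wsign_neq0 {F n A T}.
Arguments wsign_sq {F n A T}.


Section Pres.
Variables (F : fieldType) (n : nat) (L : {vspace ext F n}).
Local Notation E := (ext F n).

Definition Pres (P : pred {set 'I_n}) := forall m : E, m \in L -> proj P m \in L.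

Lemma pres_ext P Q : P =1 Q -> Pres P -> Pres Q.
Proof.
move=> e h m hm; have -> : proj Q m = proj P m by apply/ffunP => S; rewrite !ffunE e.
exact: h.
Qed.

Lemma pres_neg P : Pres P -> Pres (fun S => ~~ P S).
Proof.
move=> h m hm; have -> : proj (fun S => ~~ P S) m = m - proj P m.
  by apply/ffunP => S; rewrite !ffunE; case: (P S); rewrite ?subrr ?subr0.
by rewrite rpredB // h.
Qed.

Lemma pres_and P Q : Pres P -> Pres Q -> Pres (fun S => P S && Q S).
Proof.
move=> hP hQ m hm; have -> : proj (fun S => P S && Q S) m = proj P (proj Q m).
  by apply/ffunP => S; rewrite !ffunE; case: (P S); case: (Q S).
by apply: hP; apply: hQ.
Qed.

Lemma pres_or P Q : Pres P -> Pres Q -> Pres (fun S => P S || Q S).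
Proof.
move=> hP hQ; apply: (@pres_ext (fun S => ~~ (~~ P S && ~~ Q S))).
  by move=> S; rewrite negb_and !negbK.
by apply/pres_neg/pres_and; apply: pres_neg.
Qed.

Lemma pres_const b : Pres (fun _ => b).
Proof.
move=> m hm; case: b.
  by have -> : proj (fun _ => true) m = m by apply/ffunP => S; rewrite ffunE.
have -> : proj (fun _ => false) m = 0 by apply/ffunP => S; rewrite !ffunE.
exact: rpred0.
Qed.

Lemma pres_closure (s : seq 'I_n) :
  (forall j, j \in s -> Pres (fun S => j \in S)) ->
  forall P : pred {set 'I_n},
  (forall S S' : {set 'I_n}, (forall j, j \in s -> (j \in S) = (j \in S')) -> P S = P S') ->
  Pres P.
Proof.
elim: s => [|j s IH] hs P hP.
  apply: (@pres_ext (fun _ => P set0)); last exact: pres_const.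
  by move=> S; apply: hP.
have hs' : forall j, j \in s -> Pres (fun S => j \in S).
  by move=> x hx; apply: hs; rewrite inE hx orbT.
have P1 : Pres (fun S => P (j |: S)).
  apply: IH => // S S' h; apply: hP => x; rewrite inE => /orP [/eqP ->|hx].
    by rewrite !setU11.
  by rewrite !in_setU1 h.
have P0 : Pres (fun S => P (S :\ j)).
  apply: IH => // S S' h; apply: hP => x; rewrite inE => /orP [/eqP ->|hx].
    by rewrite !setD11.
  by rewrite !in_setD1 h.
apply: (@pres_ext (fun S => ((j \in S) && P (j |: S)) || (~~ (j \in S) && P (S :\ j)))).
  move=> S; case hj: (j \in S) => /=; rewrite ?orbF; apply: hP => x hx.
    by rewrite in_setU1; case: eqP => // ->.
  by rewrite in_setD1; case: eqP => // ->; rewrite hj.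
apply: pres_or; apply: pres_and => //; first by apply: hs; rewrite inE eqxx.
by apply: pres_neg; apply: hs; rewrite inE eqxx.
Qed.

End Pres.


Section Step1.
Variables (F : fieldType) (n : nat) (L : {vspace ext F n}).
Local Notation E := (ext F n).

Lemma wedge_ev_out (j : 'I_n) (y : E) (U : {set 'I_n}) : j \notin U -> wedge (ev j) y U = 0.
Proof.
move=> hj; apply: wedge_supp => S T; rewrite /ev ffunE.
case: (S =P [set j]) => [-> _ _|]; last by rewrite eqxx.
by apply: contraNneq hj => <-; rewrite in_setU set11.
Qed.

Lemma z_in (j i : 'I_n) (m : E) (U : {set 'I_n}) : i != j -> j \in U ->
  (xpart j m + wedge (ev i) (ypart j m)) U = 0.
Proof.
move=> hij hj; rewrite !ffunE hj add0r; apply: wedge_supp => S T.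
rewrite /ev ffunE; case: (S =P [set i]) => [-> _|]; last by rewrite eqxx.
rewrite ffunE; case hjT: (j \in T); first by rewrite eqxx.
move=> _; apply: contraTneq hj => <-.
by rewrite in_setU in_set1 eq_sym (negbTE hij) hjT.
Qed.

Lemma pres_shift (j i : 'I_n) : i != j -> shift_stable j i L -> Pres L (fun S => j \in S).
Proof.
move=> hij hst m hm; have [s [hall hv]] := (hst m).2 hm.
apply: (pres_span _ hv) => w /mapP [m' hm' ->]; split.
  apply/(hst _).1; exists [:: m']; split; last exact: memv_span1.
  by rewrite /= andbT (allP hall).
rewrite /slow_shift; case: ifP => _; [right | left]; apply/ffunP => U;
  rewrite !ffunE; case: ifP => hjU //.
  by move: (z_in m' hij hjU); rewrite !ffunE.
by rewrite wedge_ev_out // hjU.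
Qed.

End Step1.


Lemma setU_cancel n (A T S : {set 'I_n}) :
  [disjoint A & T] -> [disjoint A & S] -> A :|: T = A :|: S -> T = S.
Proof.
move=> dT dS e; apply/setP => x; have := congr1 (fun X : {set 'I_n} => x \in X) e.
rewrite /= !in_setU; case xA: (x \in A) => //=.
by rewrite (disjointFr dT xA) (disjointFr dS xA).
Qed.

Section Step2.
Variables (F : fieldType) (n : nat) (L : {vspace ext F n}) (i1 i2 : 'I_n).
Hypotheses (hi1 : val i1 = 0%N) (hi2 : val i2 = 1%N).
Variable (k : nat).
Hypotheses (hk : (2 <= k)%N) (hLk : (L <= extk F n k)%VS)
    (hsub : forall y, y \in extk F n (k - 2) ->
              wedge (wedge (ev i1) (ev i2)) y \in L)
    (hann : forall x, x \in L -> wedge (wedge (ev i1) (ev i2)) x = 0).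
Local Notation E := (ext F n).

Let A := [set i1] :|: [set i2].
Let c := wsign [set i1] [set i2] : F.

Lemma i12 : i1 != i2.
Proof. by rewrite -val_eqE hi1 hi2. Qed.

Lemma c_neq0 : c != 0.
Proof. by apply: wsign_neq0; rewrite disjoints1 inE; exact: i12. Qed.

Lemma e12E : wedge (ev i1) (ev i2) = c *: (eS A : E).
Proof. by rewrite /ev -(scale1r (eS [set i1])) wedge_sl_eS mul1r. Qed.

Lemma disjA (S : {set 'I_n}) : i1 \notin S -> i2 \notin S -> [disjoint A & S].
Proof.
move=> h1 h2; rewrite disjoints_subset; apply/subsetP => x.
by rewrite !inE => /orP [/eqP->|/eqP->].
Qed.

Lemma ann_coord (x : E) (S : {set 'I_n}) : x \in L -> i1 \notin S -> i2 \notin S -> x S = 0.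
Proof.
move=> hx h1 h2; have := congr1 (fun f : E => f (A :|: S)) (hann hx).
rewrite /= e12E wedge_sl ffunE (bigD1 S) //= eqxx mulr1 [X in _ + X]big1 ?addr0.
  move/eqP; rewrite mulf_eq0 (negbTE c_neq0) /= mulf_eq0.
  by rewrite (negbTE (wsign_neq0 (disjA h1 h2))) orbF => /eqP.
move=> T hT; case dT: [disjoint A & T].
  case: eqP => [e|]; last by rewrite mulr0.
  by rewrite (setU_cancel dT (disjA h1 h2) e) eqxx in hT.
by rewrite /wsign dT mulr0 mul0r.
Qed.

Lemma extkP (v : E) (m : nat) : v \in extk F n m -> forall S, v S != 0 -> #|S| = m.
Proof.
move=> /span_eS h S; case: (eqVneq #|S| m) => // hS /negP []; apply/eqP; exact: h.
Qed.

Lemma eS_in (U : {set 'I_n}) : i1 \in U -> i2 \in U -> #|U| = k -> (eS U : E) \in L.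
Proof.
move=> h1 h2 hU.
have sAU : A \subset U by apply/subsetP => x; rewrite !inE => /orP [/eqP->|/eqP->].
have hy : (eS (U :\: A) : E) \in extk F n (k - 2).
  rewrite /extk; apply/span_eS => S hS; rewrite ffunE; case: (S =P U :\: A) => // eSU.
  move/negP: hS; case; rewrite eSU; apply/eqP.
  by rewrite cardsD (setIidPr sAU) hU /A cards2 i12.
have := hsub hy; rewrite e12E wedge_sl_eS.
have -> : A :|: U :\: A = U by rewrite -{1}(setIidPr sAU) setID.
move=> h; have := rpredZ (c * wsign A (U :\: A))^-1 h.
rewrite scalerA mulVf ?scale1r // mulf_neq0 ?c_neq0 // wsign_neq0 //.
by rewrite disjoints_subset; apply/subsetP => x xA; rewrite inE in_setD xA.
Qed.


Lemma card_low (i3 : 'I_n) (hi3 : val i3 = 2%N) (S : {set 'I_n}) :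
  #|S :\: [set j : 'I_n | (2 < val j)%N]| = ((i1 \in S) + (i2 \in S) + (i3 \in S))%N.
Proof.
have e : S :\: [set j : 'I_n | (2 < val j)%N] =i [seq x <- [:: i1; i2; i3] | x \in S].
  move=> x; rewrite mem_filter in_setD !inE andbC; congr (_ && _).
  rewrite -!val_eqE /= hi1 hi2 hi3 -leqNgt.
  by case: x => [[|[|[|x]]] ?].
have hu : uniq [:: i1; i2; i3] by rewrite /= !inE -!val_eqE /= hi1 hi2 hi3.
rewrite (eq_card e); have /card_uniqP -> := filter_uniq (fun x => x \in S) hu.
by rewrite /=; case: (i1 \in S); case: (i2 \in S); case: (i3 \in S).
Qed.

Lemma pres_i3 (i3 : 'I_n) (hi3 : val i3 = 2%N)
  (hG : forall j : 'I_n, (2 < val j)%N -> Pres L (fun S => j \in S)) :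
  Pres L (fun S => i3 \in S).
Proof.
set G := [set j : 'I_n | (2 < val j)%N].
have hbig : Pres L (fun S => (k - 1 <= #|S :&: G|)%N).
  apply: (@pres_closure _ _ _ (enum G)).
    by move=> j; rewrite mem_enum inE; apply: hG.
  move=> S S' h; have -> : S :&: G = S' :&: G; last by [].
  apply/setP => x; rewrite !inE.
  case xG: (2 < val x)%N; rewrite ?andbT ?andbF //; apply: h.
  by rewrite mem_enum inE.
apply: (@pres_ext _ _ _ (fun S => ~~ (i3 \notin S))); first by move=> S; rewrite negbK.
apply: pres_neg => m hm.
have -> : proj (fun S => i3 \notin S) m =
   proj (fun S => [&& i1 \in S, i2 \in S & i3 \notin S]) m +
   proj (fun S => (k - 1 <= #|S :&: G|)%N) m.
  apply/ffunP => S; rewrite !ffunE.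
  have [->|mS] := eqVneq (m S) 0; first by rewrite !if_same addr0.
  have hS := extkP (subvP hLk _ hm) mS.
  have h12 : (i1 \in S) || (i2 \in S).
    by apply/negPn/negP; rewrite negb_or => /andP [h1 h2]; rewrite (ann_coord hm h1 h2) eqxx in mS.
  have := cardsID G S; rewrite (card_low hi3) hS; move: #|S :&: G| => g.
  move: h12; case: (i1 \in S); case: (i2 \in S); case: (i3 \in S) => //= _ hg;
   case: leqP => hle; rewrite ?addr0 ?add0r //; exfalso; lia.
apply: rpredD; last exact: hbig.
rewrite (ffun_expand (proj _ m)); apply: rpred_sum => S _; rewrite ffunE.
case: ifP => [/and3P [h1 h2 _]|_]; last by rewrite scale0r rpred0.
have [->|mS] := eqVneq (m S) 0; first by rewrite scale0r rpred0.
by apply: rpredZ; apply: eS_in => //; apply: (extkP (subvP hLk _ hm)).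
Qed.

End Step2.


Section Decomp.
Variables (F : fieldType) (n : nat).
Local Notation E := (ext F n).

Lemma wedge_ev_eS (j : 'I_n) (B : {set 'I_n}) :
  wedge (ev j) (eS B) = wsign [set j] B *: (eS (j |: B) : E).
Proof. by rewrite /ev -(scale1r (eS [set j])) wedge_sl_eS mul1r. Qed.

Lemma decomp (j : 'I_n) (b : E) m : b \in extk F n m.+1 ->
  (forall S, b S != 0 -> j \in S) ->
  ypart j b \in extk_without F j m /\ b = wedge (ev j) (ypart j b).
Proof.
move=> hb hsupp; split.
  rewrite /extk_without; apply/span_eS => S hS; rewrite ffunE; case: ifP => // hjS.
  have [e|bS] := eqVneq (b (j |: S)) 0; first by rewrite e mulr0.
  have := extkP hb bS; rewrite cardsU1 hjS add1n => -[eS].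
  by move: hS; rewrite eS eqxx hjS.
apply/ffunP => U; rewrite /ev wedge_eSl.
case hjU: (j \in U); last first.
  rewrite big1; last first.
    move=> T _; case: eqP => [e|]; last by rewrite mulr0.
    by rewrite -e setU11 in hjU.
  by apply/eqP; apply: contraFT hjU => /hsupp.
have dj : [disjoint [set j] & U :\ j] by rewrite disjoints1 setD11.
rewrite (bigD1 (U :\ j)) //= [X in _ + X]big1 ?addr0.
  rewrite ffunE setD11 (setD1K hjU) eqxx mulr1 wedge_ev_eS ffunE scaleoE.
  rewrite (setD1K hjU) ffunE eqxx mulr1 mulrC mulrA wsign_sq //.
  by rewrite mul1r.
move=> T hT; rewrite ffunE; case hjT: (j \in T); first by rewrite !mul0r.
case: eqP => [e|]; last by rewrite mulr0.
have dT : [disjoint [set j] & T] by rewrite disjoints1 hjT.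
have : [set j] :|: T = [set j] :|: (U :\ j) by rewrite e setD1K.
by move/(setU_cancel dT dj) => eT; rewrite eT eqxx in hT.
Qed.

End Decomp.

End Aux.
Import Aux.


Theorem corollary3p15 (F : fieldType) (hF : (2%:R : F) != 0)
    (n : nat) (i1 i2 : 'I_n) (hi1 : val i1 = 0%N) (hi2 : val i2 = 1%N)
    (k : nat) (hk : (2 <= k)%N) (L : {vspace ext F n})
    (hLk : (L <= extk F n k)%VS)
    (hsub : forall y, y \in extk F n (k - 2) ->
              wedge (wedge (ev i1) (ev i2)) y \in L)
    (hann : forall x, x \in L -> wedge (wedge (ev i1) (ev i2)) x = 0)
    (hstab : forall i j : 'I_n, (2 <= i)%N -> (2 <= j)%N -> (i < j)%N ->
              shift_stable j i L) :
  exists B : seq (ext F n),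
    basis_of L B /\
    forall b, b \in B -> forall j : 'I_n, (2 <= j)%N ->
      b \in extk_without F j k \/
      exists y, y \in extk_without F j (k - 1) /\ b = wedge (ev j) y.
Proof.
have hG3 : forall j : 'I_n, (2 < val j)%N -> Pres L (fun S => j \in S).
  move=> j hj; have h2n : (2 < n)%N by apply: ltn_trans hj (ltn_ord j).
  apply: (@pres_shift _ _ _ j (Ordinal h2n)).
    by rewrite -val_eqE /= neq_ltn hj.
  by apply: hstab => //=; apply: ltnW.
have hG2 : forall j : 'I_n, (1 < val j)%N -> Pres L (fun S => j \in S).
  move=> j hj; case: (ltngtP (val j) 2) => hj2.
  - by rewrite ltnNge hj in hj2.
  - exact: hG3.
  - exact: (pres_i3 hi1 hi2 hk hLk hsub hann hj2 hG3).
set G2 := [set j : 'I_n | (1 < val j)%N].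
pose pi (Q : {set 'I_n}) := fun S : {set 'I_n} => S :&: G2 == Q.
have hpi : forall Q, Pres L (pi Q).
  move=> Q; apply: (@pres_closure _ _ _ (enum G2)).
    by move=> j; rewrite mem_enum inE; apply: hG2.
  move=> S S' h; rewrite /pi; have -> : S :&: G2 = S' :&: G2; last by [].
  apply/setP => x; rewrite !inE.
  case xG: (1 < val x)%N; rewrite ?andbT ?andbF //; apply: h.
  by rewrite mem_enum inE.
set X := [seq proj (pi Q) b | Q <- enum {set 'I_n}, b <- vbasis L].
have hXL : forall w, w \in X -> exists Q b, [/\ b \in L, w = proj (pi Q) b & w \in L].
  move=> w /allpairsP [[Q b] [_ hb ->]] /=; exists Q, b.
  by split => //; [exact: vbasis_mem hb | apply: hpi; exact: vbasis_mem hb].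
have hspan : <<X>>%VS = L.
  apply/eqP; rewrite eqEsubv; apply/andP; split.
    by apply/span_subvP => w /hXL [Q [b [_ _ ->]]].
  rewrite -{1}(span_basis (vbasisP L)); apply/span_subvP => b hb.
  have -> : b = \sum_Q proj (pi Q) b.
    apply/ffunP => S; rewrite sum_ffunE (bigD1 (S :&: G2)) //= ffunE /pi eqxx.
    rewrite big1 ?addr0 // => Q hQ; rewrite ffunE eq_sym (negbTE hQ) //.
  apply: rpred_sum => Q _; apply: memv_span; apply/allpairsP.
  by exists (Q, b); split => //; rewrite mem_enum.
have [X' [hX'X hb]] := basis_subseq X.
exists X'; split; first by rewrite -hspan.
move=> b /hX'X /hXL [Q [b0 [hb0 eb _]]] j hj.
have hb0k := subvP hLk _ hb0.
have hsupp : forall S, b S != 0 -> S :&: G2 = Q.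
  move=> S; rewrite eb ffunE /pi; case: (S :&: G2 =P Q) => [//|_]; by rewrite eqxx.
have hjG : j \in G2 by rewrite inE.
case hjQ: (j \in Q).
  right; exists (ypart j b).
  have hk1 : k = (k - 1).+1 by lia.
  apply: decomp; first by rewrite -hk1; apply: (subvP hLk); rewrite eb; apply: hpi.
  move=> S /hsupp e; move: hjQ; rewrite -e inE => /andP [] //.
left; rewrite /extk_without; apply/span_eS => S hS.
have [//|bS] := eqVneq (b S) 0.
have e := hsupp _ bS.
have hjS : j \notin S by apply/negP => hjS; rewrite -e inE hjS hjG in hjQ.
have := bS; rewrite eb ffunE; case: ifP => // _ b0S.
by move: hS; rewrite (extkP hb0k b0S) eqxx hjS.
Qed.
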